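(* With $F_n$ as defined in the context, $$\int_{1+\frac{(\log n)^2}{n}}^{1+(\log n)^{-1}}F_n(w)\,dw\sim\tfrac12\,n\log n\qquad(n\to\infty).$$
   Context: For $w>0$ and integer $n\ge1$ let $a_n(w)=\sum_{j=0}^n w^j$, $b_n(w)=\sum_{j=1}^n jw^j$, $c_n(w)=\sum_{j=0}^n j^2w^j$, and $$F_n(w)=\frac{1}{2\sqrt{w}}\sqrt{\frac{c_n(w)}{a_n(w)}}\sqrt{\frac{a_n(w)c_n(w)-b_n(w)^2}{w\,a_n(w)^2}}.$$ $\log$ is the natural logarithm. *)

(* Defs.v *)
From Stdlib Require Import Reals.
From Coquelicot Require Import Coquelicot.
Open Scope R_scope.

Definition a_n (n : nat) (w : R) : R := sum_f_R0 (fun j => w ^ j) n.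
(* b_n(w) = sum_{j=1}^n j w^j  (the j = 0 term vanishes, so sum from 0) *)
Definition b_n (n : nat) (w : R) : R := sum_f_R0 (fun j => INR j * w ^ j) n.
Definition c_n (n : nat) (w : R) : R := sum_f_R0 (fun j => (INR j) ^ 2 * w ^ j) n.

Definition F_n (n : nat) (w : R) : R :=
  / (2 * sqrt w) * sqrt (c_n n w / a_n n w)
  * sqrt ((a_n n w * c_n n w - (b_n n w) ^ 2) / (w * (a_n n w) ^ 2)).

(* Main.v *)
Require Import Defs.
From Stdlib Require Import Reals Lra Lia Psatz.
From Coquelicot Require Import Coquelicot.
Open Scope R_scope.


Lemma a_closed n w : (w-1) * a_n n w = w ^ S n - 1.
Proof.
  induction n as [|n IH]; unfold a_n in *; [simpl; ring|].
  rewrite tech5, Rmult_plus_distr_l, IH. change (w ^ S (S n)) with (w * w ^ S n). ring.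
Qed.

Lemma b_closed n w : (w-1)^2 * b_n n w =
  INR (S n) * w ^ S n * (w-1) - w * (w ^ S n - 1).
Proof.
  induction n as [|n IH]; unfold b_n in *; [simpl; ring|].
  rewrite tech5, Rmult_plus_distr_l, IH. change (w ^ S (S n)) with (w * w ^ S n).
  rewrite !S_INR. ring.
Qed.

Lemma c_closed n w : (w-1)^3 * c_n n w =
  (w-1)*(INR (S n) * w ^ S n *(INR n * w - INR (S n)) + INR n * w * w ^ S n + w)
  - 2*w*(w ^ S n*(INR n*w - INR (S n)) + w).
Proof.
  induction n as [|n IH]; unfold c_n in *; [simpl; ring|].
  rewrite tech5, Rmult_plus_distr_l, IH. change (w ^ S (S n)) with (w * w ^ S n).
  rewrite !S_INR. ring.
Qed.

Lemma var_closed n w : (w-1)^4 * (a_n n w * c_n n w - b_n n w ^ 2) =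
  w * (w ^ S n - 1)^2 - INR (S n)^2 * w ^ S n * (w-1)^2.
Proof.
  pose proof (a_closed n w) as A; pose proof (b_closed n w) as B; pose proof (c_closed n w) as C.
  replace ((w-1)^4 * (a_n n w * c_n n w - b_n n w ^ 2)) with
   (((w-1) * a_n n w) * ((w-1)^3 * c_n n w) - ((w-1)^2 * b_n n w)^2) by ring.
  rewrite A, B, C. rewrite !S_INR. ring.
Qed.

Lemma c_le n w : 0 < w -> c_n n w <= INR n ^ 2 * a_n n w.
Proof.
  intro hw. unfold c_n, a_n. rewrite scal_sum.
  apply sum_Rle. intros j hj. rewrite (Rmult_comm (w^j)). apply Rmult_le_compat_r. apply pow_le; lra.
  apply pow_incr. split. apply pos_INR. apply le_INR; lia.
Qed.

Section P.
Variables (n : nat) (w : R).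
Hypothesis hw : 1 < w.
Let D := w - 1.
Let W := w ^ S n.
Let N := INR (S n).
Let a := a_n n w.
Let b := b_n n w.
Let c := c_n n w.

Lemma W_gt1 : 1 < W.
Proof. unfold W. apply Rlt_pow_R1; [lra|lia]. Qed.

Lemma a_eq : a = (W - 1) / D.
Proof. unfold a, W, D. rewrite <- a_closed. field. lra. Qed.

Lemma a_pos : 0 < a.
Proof. rewrite a_eq. pose proof W_gt1. unfold D. apply Rdiv_lt_0_compat; lra. Qed.

Lemma b_eq : b = (N * W * D - w * (W - 1)) / D^2.
Proof. unfold b, W, D, N. rewrite <- b_closed. field. lra. Qed.

Lemma v_eq : (a * c - b ^ 2) / (w * a ^ 2) = 1 / D^2 - N^2 * W / (w * (W-1)^2).
Proof.
  assert (H : a * c - b ^ 2 = (w * (W - 1)^2 - N^2 * W * D^2) / D^4).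
  { unfold a, b, c, W, N, D. rewrite <- var_closed. field. lra. }
  rewrite H, a_eq. pose proof W_gt1. unfold D. field. repeat split; lra.
Qed.

Lemma ba_ge : b / a >= N - w / D.
Proof.
  rewrite b_eq, a_eq. pose proof W_gt1.
  replace ((N * W * D - w * (W - 1)) / D ^ 2 / ((W - 1) / D)) with
     (N * W / (W - 1) - w / D) by (unfold D; field; lra).
  assert (N * W / (W-1) >= N).
  { assert (0 < N) by (unfold N; apply lt_0_INR; lia).
    apply Rle_ge. apply Rmult_le_reg_r with (W-1). lra.
    unfold Rdiv. rewrite Rmult_assoc, Rinv_l; nra. }
  lra.
Qed.


Lemma F_form : F_n n w = / (2 * sqrt w) * sqrt (c / a) * sqrt (1 / D^2 - N^2 * W / (w * (W-1)^2)).
Proof. unfold F_n. fold a b c. rewrite v_eq. reflexivity. Qed.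

Lemma F_upper : F_n n w <= INR n / (2 * D).
Proof.
  rewrite F_form. pose proof a_pos. pose proof W_gt1.
  assert (hD : 0 < D) by (unfold D; lra).
  assert (hs : 1 <= sqrt w) by (rewrite <- sqrt_1; apply sqrt_le_1; lra).
  assert (h1 : / (2 * sqrt w) <= / 2) by (apply Rinv_le_contravar; lra).
  assert (h2 : sqrt (c / a) <= INR n).
  { rewrite <- (sqrt_pow2 (INR n)) by apply pos_INR. apply sqrt_le_1_alt.
    apply Rmult_le_reg_r with a; auto. unfold Rdiv. rewrite Rmult_assoc, Rinv_l by lra.
    rewrite Rmult_1_r. apply c_le; lra. }
  assert (h3 : sqrt (1 / D^2 - N^2 * W / (w * (W-1)^2)) <= 1 / D).
  { rewrite <- (sqrt_pow2 (1/D)) by (apply Rlt_le, Rdiv_lt_0_compat; lra).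
    apply sqrt_le_1_alt.
    assert (0 <= N^2 * W / (w * (W-1)^2)).
    { apply Rle_mult_inv_pos. apply Rmult_le_pos; [apply pow2_ge_0|lra].
      apply Rmult_lt_0_compat; [lra|]. apply pow_lt; lra. }
    replace ((1/D)^2) with (1/D^2) by (field; lra). lra. }
  replace (INR n / (2 * D)) with (/ 2 * INR n * (1 / D)) by (field; lra).
  apply Rmult_le_compat; try apply Rmult_le_pos; try apply sqrt_pos.
  - apply Rlt_le, Rinv_0_lt_compat; lra.
  - apply Rmult_le_compat; auto. apply Rlt_le, Rinv_0_lt_compat; lra. apply sqrt_pos.
  - auto.
Qed.

Lemma F_lower e : 0 <= e <= 1 -> w <= 2 -> N^2 * W / (w * (W-1)^2) <= e ->
  0 <= INR n - 1 / D -> / (2 * w) * (INR n - 1 / D) * ((1 - e) / D) <= F_n n w.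
Proof.
  intros he hw2 hX hp. rewrite F_form. pose proof a_pos. pose proof W_gt1.
  assert (hD : 0 < D) by (unfold D; lra).
  assert (hs : sqrt w <= w).
  { rewrite <- (sqrt_pow2 w) at 2 by lra. apply sqrt_le_1_alt. nra. }
  assert (hs0 : 0 < sqrt w) by (apply sqrt_lt_R0; lra).
  assert (h1 : / (2 * w) <= / (2 * sqrt w)) by (apply Rinv_le_contravar; lra).
  assert (hv : (1 - e) ^ 2 / D ^ 2 <= 1 / D^2 - N^2 * W / (w * (W-1)^2)).
  { assert (hu : 1 <= 1 / D^2).
    { apply Rmult_le_reg_r with (D^2). apply pow_lt; lra.
      replace (1 / D^2 * D^2) with 1 by (field; lra). assert (D <= 1) by (unfold D; lra). nra. }
    replace ((1 - e) ^ 2 / D ^ 2) with ((1-e)^2 * (1/D^2)) by (field; lra).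
    set (u := 1 / D^2) in *.
    assert (e*e*u <= 1*e*u) by (apply Rmult_le_compat_r; [lra|apply Rmult_le_compat_r; lra]).
    assert (0 <= e*(u-1)) by (apply Rmult_le_pos; lra). nra. }
  assert (h3 : (1 - e) / D <= sqrt (1 / D^2 - N^2 * W / (w * (W-1)^2))).
  { rewrite <- (sqrt_pow2 ((1-e)/D)) by (apply Rmult_le_pos; [lra|apply Rlt_le, Rinv_0_lt_compat; lra]).
    apply sqrt_le_1_alt. replace (((1-e)/D)^2) with ((1 - e) ^ 2 / D ^ 2) by (field; lra). lra. }
  assert (hba := ba_ge).
  assert (hba' : INR n - 1 / D <= b / a).
  { replace (INR n - 1 / D) with (N - w / D). lra. unfold N, D. rewrite S_INR. field. lra. }
  assert (hca : (b/a)^2 <= c / a).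
  { assert (0 <= 1 / D^2 - N^2 * W / (w * (W-1)^2)).
    { apply Rle_trans with ((1 - e) ^ 2 / D ^ 2); auto. apply Rmult_le_pos. apply pow2_ge_0.
      apply Rlt_le, Rinv_0_lt_compat, pow_lt; lra. }
    rewrite <- v_eq in H1.
    assert (0 <= a * c - b^2).
    { apply Rmult_le_reg_r with (/ (w * a^2)). apply Rinv_0_lt_compat. apply Rmult_lt_0_compat; [lra|apply pow_lt; lra].
      rewrite Rmult_0_l. exact H1. }
    replace (c / a) with ((b/a)^2 + (a*c - b^2)/a^2) by (field; lra).
    assert (0 <= (a*c - b^2)/a^2). apply Rle_mult_inv_pos; auto. apply pow_lt; lra. lra. }
  assert (h2 : INR n - 1 / D <= sqrt (c / a)).
  { rewrite <- (sqrt_pow2 (INR n - 1/D)) by lra. apply sqrt_le_1_alt.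
    apply Rle_trans with ((b/a)^2); auto. apply pow_incr; lra. }
  assert (0 <= / (2 * w)) by (apply Rlt_le, Rinv_0_lt_compat; lra).
  assert (0 <= (1 - e) / D) by (apply Rmult_le_pos; [lra|apply Rlt_le, Rinv_0_lt_compat; lra]).
  apply Rmult_le_compat; auto.
  - apply Rmult_le_pos; auto.
  - apply Rmult_le_compat; auto.
Qed.

End P.

Lemma cont_sum (f : nat -> R -> R) n x :
  (forall j, continuity_pt (f j) x) -> continuity_pt (fun w => sum_f_R0 (fun j => f j w) n) x.
Proof.
  intro H. induction n as [|n IH].
  - simpl. apply H.
  - apply continuity_pt_ext with (fun w => sum_f_R0 (fun j => f j w) n + f (S n) w).
    + intro y. rewrite tech5. reflexivity.
    + apply continuity_pt_plus; auto.
Qed.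

Lemma cont_pow j x : continuity_pt (fun w => w ^ j) x.
Proof. apply derivable_continuous_pt, derivable_pt_pow. Qed.

Lemma cont_sqrt_comp f x : continuity_pt f x -> continuity_pt (fun w => sqrt (f w)) x.
Proof.
  intro H. apply (continuity_pt_comp f sqrt); auto.
  apply continuity_pt_filterlim, continuous_sqrt.
Qed.

Lemma cont_a n x : continuity_pt (a_n n) x.
Proof. apply (cont_sum (fun j w => w ^ j)). intro; apply cont_pow. Qed.
Lemma cont_b n x : continuity_pt (b_n n) x.
Proof. apply (cont_sum (fun j w => INR j * w ^ j)). intro; apply continuity_pt_mult.
  apply continuity_pt_const; intros u v; reflexivity. apply cont_pow. Qed.
Lemma cont_c n x : continuity_pt (c_n n) x.
Proof. apply (cont_sum (fun j w => INR j ^ 2 * w ^ j)). intro; apply continuity_pt_mult.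
  apply continuity_pt_const; intros u v; reflexivity. apply cont_pow. Qed.

Lemma F_cont n x : 1 < x -> continuous (F_n n) x.
Proof.
  intro hx. apply continuity_pt_filterlim.
  assert (ha : a_n n x <> 0) by (pose proof (a_pos n x hx); lra).
  assert (hs : sqrt x <> 0) by (pose proof (sqrt_lt_R0 x); lra).
  unfold F_n. apply continuity_pt_mult; [apply continuity_pt_mult|].
  - apply (continuity_pt_inv (fun w => 2 * sqrt w)).
    apply continuity_pt_mult. apply continuity_pt_const; intros u v; reflexivity.
    apply cont_sqrt_comp, continuity_pt_id. lra.
  - apply cont_sqrt_comp. apply (continuity_pt_div (c_n n) (a_n n)); auto using cont_a, cont_c.
  - apply cont_sqrt_comp.
    apply (continuity_pt_div (fun w => a_n n w * c_n n w - b_n n w ^ 2) (fun w => w * a_n n w ^ 2)).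
    + apply continuity_pt_minus. apply continuity_pt_mult; auto using cont_a, cont_c.
      apply (continuity_pt_comp (b_n n) (fun y => y ^ 2)). apply cont_b. apply cont_pow.
    + apply continuity_pt_mult. apply continuity_pt_id.
      apply (continuity_pt_comp (a_n n) (fun y => y ^ 2)). apply cont_a. apply cont_pow.
    + apply Rmult_integral_contrapositive; split. lra. apply pow_nonzero; auto.
Qed.

Lemma exp_pow_nat x k : exp x ^ k = exp (INR k * x).
Proof.
  induction k as [|k IH]. simpl. rewrite Rmult_0_l, exp_0. reflexivity.
  rewrite S_INR. simpl. rewrite IH, <- exp_plus. f_equal. ring.
Qed.

Lemma exp_le_1plus D : 0 <= D -> exp (D / (1 + D)) <= 1 + D.
Proof.
  intro hD. pose proof (exp_ineq1_le (- (D / (1 + D)))) as H.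
  rewrite exp_Ropp in H. set (u := exp (D / (1 + D))) in *.
  assert (0 < u) by apply exp_pos.
  replace (1 + - (D / (1 + D))) with (/ (1 + D)) in H by (field; lra).
  apply Rmult_le_reg_r with (/ u * / (1 + D)).
  apply Rmult_lt_0_compat; apply Rinv_0_lt_compat; lra.
  replace (u * (/ u * / (1 + D))) with (/ (1 + D)) by (field; lra).
  replace ((1 + D) * (/ u * / (1 + D))) with (/ u) by (field; lra). lra.
Qed.

Lemma W_lower n D : 0 < D <= 1 -> exp (INR n * D / 2) <= (1 + D) ^ S n.
Proof.
  intro hD.
  apply Rle_trans with ((1 + D) ^ n).
  - replace (INR n * D / 2) with (INR n * (D / 2)) by field. rewrite <- exp_pow_nat.
    apply pow_incr. split. apply Rlt_le, exp_pos.
    apply Rle_trans with (exp (D / (1 + D))). 2: apply exp_le_1plus; lra.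
    destruct (Req_dec D 1) as [->|hne]. right; f_equal; field.
    left. apply exp_increasing. apply Rmult_lt_reg_r with (2 * (1 + D)). lra.
    replace (D / 2 * (2 * (1 + D))) with (D * (1 + D)) by field.
    replace (D / (1 + D) * (2 * (1 + D))) with (2 * D) by (field; lra). nra.
  - simpl. assert (0 < (1 + D) ^ n) by (apply pow_lt; lra). nra.
Qed.

Definition g (n : nat) (w : R) := INR n / (2 * (w - 1)).

Lemma g_RInt n A B : 1 < A -> A <= B ->
  is_RInt (g n) A B (INR n / 2 * (ln (B - 1) - ln (A - 1))).
Proof.
  intros hA hAB.
  replace (INR n / 2 * (ln (B - 1) - ln (A - 1))) with
    (minus ((fun w => INR n / 2 * ln (w - 1)) B) ((fun w => INR n / 2 * ln (w - 1)) A)).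
  2: { unfold minus, plus, opp; simpl. ring. }
  apply (is_RInt_derive (fun w => INR n / 2 * ln (w - 1)) (g n)).
  all: cbv beta.
  - intros x hx. rewrite Rmin_left, Rmax_right in hx by lra.
    auto_derive. lra. unfold g. field. lra.
  - intros x hx. rewrite Rmin_left, Rmax_right in hx by lra.
    apply continuity_pt_filterlim. unfold g.
    apply (continuity_pt_div (fun _ => INR n) (fun w => 2 * (w - 1))).
    apply continuity_pt_const; intros u v; reflexivity.
    apply continuity_pt_mult. apply continuity_pt_const; intros u v; reflexivity.
    apply continuity_pt_minus. apply continuity_pt_id. apply continuity_pt_const; intros u v; reflexivity.
    lra.
Qed.

Lemma bound_n n : (1 <= n)%nat -> 256 <= ln (INR n) ->
  3 * ln (ln (INR n)) / ln (INR n) <= 1/3 ->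
  1 - (1 / ln (INR n) ^ 2 + 16 / INR n + / ln (INR n) + 3 * ln (ln (INR n)) / ln (INR n))
  <= RInt (F_n n) (1 + ln (INR n) ^ 2 / INR n) (1 + / ln (INR n)) / (/ 2 * INR n * ln (INR n))
  <= 1.
Proof.
  intros hn hL hq. set (L := ln (INR n)) in *. set (x := INR n) in *.
  assert (hx0 : 0 < x) by (unfold x; apply lt_0_INR; lia).
  assert (hxe : x = exp L) by (unfold L; rewrite exp_ln; auto).
  assert (hx1 : 1 + L <= x) by (rewrite hxe; apply exp_ineq1_le).
  assert (hlnL : 0 <= ln L) by (rewrite <- ln_1; apply ln_le; lra).
  assert (hL3 : L ^ 3 < x).
  { rewrite hxe. replace L with (INR 4 * (L / 4)) at 2 by (simpl; field).
    rewrite <- exp_pow_nat.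
    apply Rlt_le_trans with ((1 + L/4) ^ 4).
    2: { apply pow_incr. split. lra. apply exp_ineq1_le. }
    assert (L^3 <= (L/4)^4).
    { replace ((L/4)^4) with (L^3 * (L / 256)) by field.
      assert (0 < L^3) by (apply pow_lt; lra).
      rewrite <- (Rmult_1_r (L^3)) at 1. apply Rmult_le_compat_l; lra. }
    assert ((L/4)^4 < (1 + L/4)^4).
    { set (y := L/4). assert (64 <= y) by (unfold y; lra). assert (y^4 < (1+y)^4) by (simpl; nra). assumption. }
    lra. }
  set (A := 1 + L ^ 2 / x). set (B := 1 + / L).
  assert (hA1 : 1 < A) by (unfold A; assert (0 < L^2/x) by (apply Rdiv_lt_0_compat; [apply pow_lt|]; lra); lra).
  assert (hAB : A < B).
  { unfold A, B. apply Rplus_lt_compat_l.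
    apply Rmult_lt_reg_r with (x * L). nra.
    replace (L ^ 2 / x * (x * L)) with (L^3) by (field; lra).
    replace (/ L * (x * L)) with x by (field; lra). lra. }
  assert (hB2 : B <= 2) by (unfold B; assert (/ L <= 1) by (rewrite <- Rinv_1; apply Rinv_le_contravar; lra); lra).
  set (e := 16 / x).
  assert (he : 0 <= e <= 1) by (unfold e; split; [apply Rlt_le, Rdiv_lt_0_compat; lra|
     apply Rmult_le_reg_r with x; [lra|]; replace (16 / x * x) with 16 by (field; lra); lra]).
  set (k := (1 - 1 / L ^ 2) * (1 - e) / (1 + / L)).
  assert (hup : forall w, A < w < B -> F_n n w <= g n w).
  { intros w hw. apply F_upper. lra. }
  assert (hlo : forall w, A < w < B -> k * g n w <= F_n n w).
  { intros w hw. set (D := w - 1).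
    assert (hD0 : L ^ 2 / x < D) by (unfold D, A in *; lra).
    assert (hD1 : D < / L) by (unfold D, B in *; lra).
    assert (hDp : 0 < D) by (assert (0 < L^2/x) by (apply Rdiv_lt_0_compat; [apply pow_lt|]; lra); lra).
    assert (hL2 : 0 < L ^ 2) by (apply pow_lt; lra).
    assert (hiD : 1 / D <= x / L ^ 2).
    { apply Rmult_le_reg_r with (D * L ^ 2). nra.
      replace (1 / D * (D * L ^ 2)) with (L^2) by (field; lra).
      replace (x / L ^ 2 * (D * L ^ 2)) with (x * D) by (field; lra).
      apply Rlt_le. apply Rmult_lt_reg_r with (/ x). apply Rinv_0_lt_compat; lra.
      replace (x * D * / x) with D by (field; lra). unfold Rdiv in hD0. exact hD0. }
    assert (hxL : x / L ^ 2 <= x * (1 / L ^ 2)) by (right; field; lra).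
    assert (hpL : 1 / L ^ 2 <= 1).
    { apply Rmult_le_reg_r with (L^2). lra. replace (1 / L^2 * L^2) with 1 by (field; lra). nra. }
    assert (hnD : x * (1 - 1 / L ^ 2) <= x - 1 / D) by nra.
    assert (hW : x ^ 3 <= w ^ S n).
    { replace w with (1 + D) by (unfold D; ring).
      apply Rle_trans with (exp (x * D / 2)). 2: apply W_lower; assert (/ L <= 1) by (rewrite <- Rinv_1; apply Rinv_le_contravar; lra); lra.
      rewrite hxe at 1. rewrite exp_pow_nat. left. apply exp_increasing.
      assert (L^2 < x * D).
      { apply Rmult_lt_reg_r with (/ x). apply Rinv_0_lt_compat; lra.
        replace (x * D * / x) with D by (field; lra). exact hD0. }
      simpl INR. nra. }
    assert (hX : INR (S n) ^ 2 * w ^ S n / (w * (w ^ S n - 1) ^ 2) <= e).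
    { set (W := w ^ S n) in *. set (N := INR (S n)).
      assert (hN : N = x + 1) by (unfold N, x; apply S_INR).
      assert (hx3 : 257 ^ 3 <= x ^ 3) by (apply pow_incr; lra).
      assert (hW2 : 2 <= W) by lra.
      assert (hwW : 0 < w * (W - 1) ^ 2) by (apply Rmult_lt_0_compat; [lra|apply pow_lt; lra]).
      unfold e. apply Rmult_le_reg_r with (w * (W - 1) ^ 2 * x). nra.
      replace (N ^ 2 * W / (w * (W - 1) ^ 2) * (w * (W - 1) ^ 2 * x)) with (N^2 * W * x) by (field; lra).
      replace (16 / x * (w * (W - 1) ^ 2 * x)) with (16 * (w * (W - 1) ^ 2)) by (field; lra).
      assert (4 * W ^ 2 <= 16 * (W - 1) ^ 2) by nra.
      assert (16 * (W - 1) ^ 2 <= 16 * (w * (W - 1) ^ 2)) by (assert (0 <= (W-1)^2) by apply pow2_ge_0; nra).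
      assert (N ^ 2 <= 4 * x ^ 2) by (rewrite hN; nra).
      assert (N ^ 2 * W * x <= 4 * x^3 * W) by (assert (0 < W * x) by nra; simpl; nra).
      assert (4 * x^3 * W <= 4 * W ^ 2) by (simpl in *; nra).
      lra. }
    assert (h1w : 1 < w) by lra. assert (hw2 : w <= 2) by lra.
    assert (hxp : 0 <= x * (1 - 1 / L ^ 2)) by (apply Rmult_le_pos; lra).
    assert (hpos : 0 <= INR n - 1 / (w - 1)) by (fold x D; lra).
    assert (hF := F_lower n w h1w e he hw2 hX hpos).
    fold D in hF. eapply Rle_trans; [|exact hF].
    replace (k * g n w) with (/ (2 * (1 + / L)) * (x * (1 - 1 / L ^ 2)) * ((1 - e) / D)).
    2: { unfold k, g, D, x. field. split. lra. split. lra. assert (0 < / L) by (apply Rinv_0_lt_compat; lra). lra. }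
    assert (hiL : 0 < / L) by (apply Rinv_0_lt_compat; lra).
    apply Rmult_le_compat.
    - apply Rmult_le_pos. apply Rlt_le, Rinv_0_lt_compat; lra. exact hxp.
    - apply Rmult_le_pos. lra. apply Rlt_le, Rinv_0_lt_compat; lra.
    - apply Rmult_le_compat.
      + apply Rlt_le, Rinv_0_lt_compat; lra.
      + exact hxp.
      + apply Rinv_le_contravar; unfold D in *; lra.
      + exact hnD.
    - lra. }
  assert (Hg := g_RInt n A B hA1 (Rlt_le _ _ hAB)).
  set (Ig := INR n / 2 * (ln (B - 1) - ln (A - 1))) in Hg.
  assert (HIg : Ig = x / 2 * (L - 3 * ln L)).
  { unfold Ig, A, B. fold x. replace (1 + / L - 1) with (/ L) by ring.
    replace (1 + L^2 / x - 1) with (L * L / x) by (simpl; field; lra).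
    rewrite ln_Rinv, ln_div, ln_mult by (try apply Rmult_lt_0_compat; lra).
    fold L. ring. }
  assert (exF : ex_RInt (F_n n) A B).
  { apply (ex_RInt_continuous (V:=R_CompleteNormedModule)). intros z hz. rewrite Rmin_left, Rmax_right in hz by lra.
    apply F_cont. lra. }
  assert (exg : ex_RInt (g n) A B) by (exists Ig; exact Hg).
  assert (Hk : is_RInt (fun w => k * g n w) A B (k * Ig)) by exact (is_RInt_scal _ _ _ k _ Hg).
  assert (exk : ex_RInt (fun w => k * g n w) A B) by (exists (k * Ig); exact Hk).
  assert (U : RInt (F_n n) A B <= Ig).
  { rewrite <- (is_RInt_unique _ _ _ _ Hg). apply RInt_le; auto. lra. }
  assert (Lo : k * Ig <= RInt (F_n n) A B).
  { rewrite <- (is_RInt_unique _ _ _ _ Hk). apply RInt_le; auto. lra. }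
  set (R := RInt (F_n n) A B) in *.
  set (q := 3 * ln L / L) in *.
  assert (hden : 0 < / 2 * x * L) by nra.
  assert (hIgq : Ig / (/ 2 * x * L) = 1 - q) by (rewrite HIg; unfold q; field; lra).
  assert (hq0 : 0 <= q) by (unfold q; apply Rmult_le_pos; [lra|apply Rlt_le, Rinv_0_lt_compat; lra]).
  split.
  - apply Rle_trans with (k * (1 - q)).
    + assert (hp1 : 0 <= 1 / L ^ 2 <= 1).
      { split. apply Rlt_le, Rdiv_lt_0_compat; [lra|apply pow_lt; lra].
        apply Rmult_le_reg_r with (L^2). apply pow_lt; lra.
        replace (1 / L^2 * L^2) with 1 by (field; lra). nra. }
      assert (hp3 : 0 <= / L <= 1).
      { split. apply Rlt_le, Rinv_0_lt_compat; lra. rewrite <- Rinv_1. apply Rinv_le_contravar; lra. }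
      assert (hk : 1 - 1 / L ^ 2 - e - / L <= k).
      { unfold k. apply Rmult_le_reg_r with (1 + / L). lra.
        replace ((1 - 1 / L ^ 2) * (1 - e) / (1 + / L) * (1 + / L)) with ((1 - 1 / L ^ 2) * (1 - e)) by (field; lra).
        nra. }
      assert (0 <= 1 - q) by lra.
      assert ((1 - 1 / L ^ 2 - e - / L) * (1 - q) <= k * (1 - q)) by (apply Rmult_le_compat_r; lra).
      nra.
    + rewrite <- hIgq. unfold Rdiv. rewrite <- Rmult_assoc. apply Rmult_le_compat_r.
      apply Rlt_le, Rinv_0_lt_compat; lra. exact Lo.
  - apply Rle_trans with (Ig / (/ 2 * x * L)).
    + apply Rmult_le_compat_r. apply Rlt_le, Rinv_0_lt_compat; lra. exact U.
    + lra.
Qed.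

Theorem proposition3p2 :
  is_lim_seq
    (fun n : nat =>
       RInt (F_n n) (1 + (ln (INR n)) ^ 2 / INR n) (1 + / ln (INR n))
       / (/ 2 * INR n * ln (INR n)))
    1.
Proof.
  assert (hL : is_lim_seq (fun n => ln (INR n)) p_infty).
  { apply (is_lim_comp_seq ln INR p_infty p_infty is_lim_ln_p).
    exists 0%nat; intros; discriminate. exact is_lim_seq_INR. }
  assert (hiL : is_lim_seq (fun n => / ln (INR n)) 0).
  { apply (is_lim_seq_inv _ p_infty hL). discriminate. }
  assert (hix : is_lim_seq (fun n => / INR n) 0).
  { apply (is_lim_seq_inv _ p_infty is_lim_seq_INR). discriminate. }
  assert (hq : is_lim_seq (fun n => ln (ln (INR n)) / ln (INR n)) 0).
  { apply (is_lim_comp_seq (fun y => ln y / y) _ p_infty 0 is_lim_div_ln_p).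
    exists 0%nat; intros; discriminate. exact hL. }
  set (e := fun n => 1 / ln (INR n) ^ 2 + 16 / INR n + / ln (INR n) + 3 * ln (ln (INR n)) / ln (INR n)).
  assert (he : is_lim_seq (fun n => 1 - e n) 1).
  { assert (H := is_lim_seq_plus' _ _ _ _ (is_lim_seq_const 1)
       (is_lim_seq_scal_l _ (-1) _ (is_lim_seq_plus' _ _ _ _
         (is_lim_seq_plus' _ _ _ _ (is_lim_seq_plus' _ _ _ _ (is_lim_seq_mult' _ _ _ _ hiL hiL)
            (is_lim_seq_scal_l _ 16 _ hix)) hiL) (is_lim_seq_scal_l _ 3 _ hq)))).
    simpl in H. replace (1 + -1 * (0 * 0 + 16 * 0 + 0 + 3 * 0)) with 1 in H by ring.
    apply is_lim_seq_ext with (2 := H). intro n. unfold e.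
    replace (ln (INR n) ^ 2) with (ln (INR n) * ln (INR n)) by ring.
    unfold Rdiv. rewrite Rinv_mult. ring. }
  apply is_lim_seq_le_le_loc with (u := fun n => 1 - e n) (w := fun _ => 1); auto.
  2: apply is_lim_seq_const.
  apply is_lim_seq_spec in hL. apply is_lim_seq_spec in hq.
  specialize (hL 256). assert (hq' := hq (mkposreal (1/9) ltac:(lra))).
  assert (h1 : eventually (fun n => (1 <= n)%nat)) by (exists 1%nat; auto).
  generalize (filter_and _ _ h1 (filter_and _ _ (hL) hq')).
  apply filter_imp. intros n [hn [hLn hqn]]. simpl in hqn.
  rewrite Rminus_0_r in hqn. apply Rabs_def2 in hqn.
  apply bound_n; auto. lra.
  unfold Rdiv in *. rewrite Rmult_assoc. lra.
Qed.
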